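(* Let $\mathbb{K}\in\{\mathbb{R},\mathbb{C}\}$ and $\mathcal{A}=(A_1,\ldots,A_d)$ positive semidefinite matrices in $\mathbb{K}^{n\times n}$ (symmetric/Hermitian) that pairwise commute. Then $\mathrm{Opt}(\mathcal{A})=\mathrm{OptSDP}(\mathcal{A})$.
   Context: $\langle x,y\rangle=x^\dagger y$ with $\dagger$ the (conjugate) transpose, $\langle A,X\rangle=\operatorname{Tr}(A^\dagger X)$. $\mathrm{Opt}(\mathcal{A})=\max_{x\in\mathbb{K}^n,\ \|x\|=1}\big(\prod_{i=1}^d\langle x,A_ix\rangle\big)^{1/d}$; $\mathrm{OptSDP}(\mathcal{A})=\max\big\{\big(\prod_{i=1}^d\langle A_i,X\rangle\big)^{1/d}: X\text{ symmetric/Hermitian},\ X\succeq0,\ \operatorname{Tr}X=1\big\}$. *)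

(* Defs.v *)
From HB Require Import structures.
From mathcomp Require Import all_boot all_order all_algebra.
From mathcomp Require Import all_classical all_reals.
From mathcomp Require Import exp.
From mathcomp Require Import complex.

Set Implicit Arguments.
Unset Strict Implicit.
Unset Printing Implicit Defensive.
Import Order.TTheory GRing.Theory Num.Theory.
Local Open Scope ring_scope.
Local Open Scope classical_set_scope.

Section RealCase.
Variable R : realType.

Definition innerR (n : nat) (x y : 'cV[R]_n) : R := (x^T *m y) 0 0.
Definition mxinnerR (n : nat) (A X : 'M[R]_n) : R := \tr (A^T *m X).

Definition symR (n : nat) (A : 'M[R]_n) : Prop := A^T = A.
Definition psdR (n : nat) (A : 'M[R]_n) : Prop :=
  symR A /\ forall x : 'cV[R]_n, 0 <= innerR x (A *m x).

Definition OptR (n d : nat) (A : 'I_d -> 'M[R]_n) : R :=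
  sup [set v | exists x : 'cV[R]_n, innerR x x = 1 /\
        v = powR (\prod_(i < d) innerR x (A i *m x)) (d%:R^-1)].

Definition OptSDPR (n d : nat) (A : 'I_d -> 'M[R]_n) : R :=
  sup [set v | exists X : 'M[R]_n, psdR X /\ \tr X = 1 /\
        v = powR (\prod_(i < d) mxinnerR (A i) X) (d%:R^-1)].
End RealCase.

Section ComplexCase.
Variable R : realType.

Definition dagC (m n : nat) (A : 'M[R[i]]_(m, n)) : 'M[R[i]]_(n, m) :=
  (map_mx (@conjc R) A)^T.
Definition innerC (n : nat) (x y : 'cV[R[i]]_n) : R[i] := (dagC x *m y) 0 0.
Definition mxinnerC (n : nat) (A X : 'M[R[i]]_n) : R[i] := \tr (dagC A *m X).

Definition hermC (n : nat) (A : 'M[R[i]]_n) : Prop := dagC A = A.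
(* positive semidefinite: Hermitian and x^dagger A x is a nonnegative real *)
Definition psdC (n : nat) (A : 'M[R[i]]_n) : Prop :=
  hermC A /\ forall x : 'cV[R[i]]_n, 0 <= innerC x (A *m x).

(* for Hermitian A the values <x,Ax>, <A,X> are real; we take real parts *)
Definition OptC (n d : nat) (A : 'I_d -> 'M[R[i]]_n) : R :=
  sup [set v | exists x : 'cV[R[i]]_n, innerC x x = 1 /\
        v = powR (\prod_(i < d) complex.Re (innerC x (A i *m x))) (d%:R^-1)].

Definition OptSDPC (n d : nat) (A : 'I_d -> 'M[R[i]]_n) : R :=
  sup [set v | exists X : 'M[R[i]]_n, psdC X /\ \tr X = 1 /\
        v = powR (\prod_(i < d) complex.Re (mxinnerC (A i) X)) (d%:R^-1)].
End ComplexCase.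

(* Main.v *)
Require Import Defs.
From HB Require Import structures.
From mathcomp Require Import all_boot all_order all_algebra.
From mathcomp Require Import all_classical all_reals.
From mathcomp Require Import ring lra.
From mathcomp Require Import exp complex spectral.
Import Order.TTheory GRing.Theory Num.Theory.
Set Implicit Arguments.
Unset Strict Implicit.
Unset Printing Implicit Defensive.
Local Open Scope ring_scope.

Local Open Scope sesquilinear_scope.

Lemma codiag (C : numClosedFieldType) n d (A : 'I_d -> 'M[C]_n) :
  (forall i, (A i) ^t Num.conj = A i) -> (forall i j, A i *m A j = A j *m A i) ->
  exists2 P : 'M[C]_n, P \is unitarymx &
    forall i j k, j != k -> (P *m A i *m P ^t Num.conj) j k = 0.
Proof.
move=> Ah Ac.
have [] := @cotrigonalization C n [seq A i | i <- enum 'I_d].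
  by move=> _ _ /mapP[i _ ->] /mapP[j _ ->]; exact: Ac.
move=> P Pu /allP PA; exists P => // i.
have := PA (A i) (map_f _ (mem_enum _ i)).
rewrite /= /similar_to conjymx // => /is_trig_mxP T.
set M := P *m A i *m P ^t Num.conj in T *.
have MH : M ^t Num.conj = M.
  by rewrite /M !trmx_mul !map_mxM trmxCK Ah mulmxA.
move=> j k; case: (ltngtP j k) => [jk|kj|/val_inj->]; last by rewrite eqxx.
- by move=> _; exact: T.
- move=> _; have : (M ^t Num.conj) k j = 0 by rewrite MH; exact: T.
  by rewrite !mxE => /eqP; rewrite conjC_eq0 => /eqP.
Qed.

Section Cx.
Variable R : realType.
Local Notation C := R[i].
Definition ReM m n (M : 'M[C]_(m, n)) : 'M[R]_(m, n) := map_mx (@complex.Re R) M.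
Definition ImM m n (M : 'M[C]_(m, n)) : 'M[R]_(m, n) := map_mx (@complex.Im R) M.

Lemma Re_sum (I : Type) (r : seq I) (P : pred I) (F : I -> C) :
  complex.Re (\sum_(i <- r | P i) F i) = \sum_(i <- r | P i) complex.Re (F i).
Proof. by apply: (big_morph (@complex.Re R)) => // [[a b] [c d]]. Qed.
Lemma Im_sum (I : Type) (r : seq I) (P : pred I) (F : I -> C) :
  complex.Im (\sum_(i <- r | P i) F i) = \sum_(i <- r | P i) complex.Im (F i).
Proof. by apply: (big_morph (@complex.Im R)) => // [[a b] [c d]]. Qed.

Lemma ReM_mul m n p (M : 'M[C]_(m, n)) (N : 'M[C]_(n, p)) :
  ReM (M *m N) = ReM M *m ReM N - ImM M *m ImM N.
Proof.
apply/matrixP => i j; rewrite !mxE Re_sum -sumrB; apply: eq_bigr => k _.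
by rewrite !mxE; case: (M i k) => a b; case: (N k j) => c e.
Qed.

Lemma ImM_mul m n p (M : 'M[C]_(m, n)) (N : 'M[C]_(n, p)) :
  ImM (M *m N) = ReM M *m ImM N + ImM M *m ReM N.
Proof.
apply/matrixP => i j; rewrite !mxE Im_sum -big_split; apply: eq_bigr => k _.
by rewrite !mxE; case: (M i k) => a b; case: (N k j) => c e.
Qed.

Lemma ReM_dag m n (M : 'M[C]_(m, n)) : ReM (dagC M) = (ReM M)^T.
Proof. by apply/matrixP => i j; rewrite !mxE; case: (M j i). Qed.
Lemma ImM_dag m n (M : 'M[C]_(m, n)) : ImM (dagC M) = - (ImM M)^T.
Proof. by apply/matrixP => i j; rewrite !mxE; case: (M j i). Qed.
Lemma ReM1 n : ReM (1%:M : 'M[C]_n) = 1%:M.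
Proof. by apply/matrixP => i j; rewrite !mxE; case: (i == j). Qed.
Lemma ImM1 n : ImM (1%:M : 'M[C]_n) = 0.
Proof. by apply/matrixP => i j; rewrite !mxE; case: (i == j). Qed.

Definition CM m n (A : 'M[R]_(m, n)) : 'M[C]_(m, n) := map_mx (real_complex R) A.
Lemma ReM_CM m n (A : 'M[R]_(m, n)) : ReM (CM A) = A.
Proof. by apply/matrixP => i j; rewrite !mxE. Qed.
Lemma ImM_CM m n (A : 'M[R]_(m, n)) : ImM (CM A) = 0.
Proof. by apply/matrixP => i j; rewrite !mxE. Qed.
Lemma dagCE m n (A : 'M[C]_(m, n)) : dagC A = A ^t Num.conj.
Proof. by rewrite /dagC map_trmx. Qed.

Lemma CM_herm n (A : 'M[R]_n) : A^T = A -> (CM A) ^t Num.conj = CM A.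
Proof.
move=> AS; apply/matrixP => i j; rewrite !mxE.
have := congr1 (fun M : 'M[R]_n => M j i) AS; rewrite mxE => ->.
by apply/eqP; rewrite eq_complex /= oppr0 !eqxx.
Qed.

Lemma CM_mul m n p (A : 'M[R]_(m, n)) (B : 'M[R]_(n, p)) : CM (A *m B) = CM A *m CM B.
Proof. by rewrite /CM map_mxM. Qed.

Lemma herm_Im_diag n (M : 'M[C]_n) k : M ^t Num.conj = M -> complex.Im (M k k) = 0.
Proof.
move=> MH; have := congr1 (fun N : 'M[C]_n => N k k) MH; rewrite !mxE.
case: (M k k) => a b [] /eqP; rewrite eq_sym -subr_eq0 opprK -mulr2n mulrn_eq0 /=.
by move/eqP.
Qed.

Lemma real_decomp n d (A : 'I_d -> 'M[R]_n) :
  (forall i, (A i)^T = A i) -> (forall i j, A i *m A j = A j *m A i) ->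
  exists R0 J : 'M[R]_n, exists L : 'I_d -> 'M[R]_n,
  [/\ R0 *m R0^T + J *m J^T = 1%:M, R0^T *m R0 + J^T *m J = 1%:M,
      forall i, is_diag_mx (L i), forall i, A i *m R0 = R0 *m L i &
      forall i, A i *m J = J *m L i].
Proof.
move=> AS Acm.
have Acm' : forall i j, CM (A i) *m CM (A j) = CM (A j) *m CM (A i).
  by move=> i j; rewrite -!CM_mul Acm.
have [P Pu PD] := @codiag _ n d (fun i => CM (A i)) (fun i => CM_herm (AS i)) Acm'.
set V := P ^t Num.conj.
have PV : P *m V = 1%:M by apply/unitarymxP.
have VP : V *m P = 1%:M by rewrite -[V *m P]mul1mx mulmxA mulmxKtV.
have dV : dagC V = P by rewrite dagCE trmxCK.
set D := fun i => P *m CM (A i) *m V.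
have AV i : CM (A i) *m V = V *m D i.
  by rewrite /D !mulmxA VP mul1mx.
have DH i : (D i) ^t Num.conj = D i.
  by rewrite /D !trmx_mul !map_mxM trmxCK CM_herm // mulmxA.
have ImD i : ImM (D i) = 0.
  apply/matrixP => j k; rewrite [LHS]mxE [RHS]mxE; have [->|jk] := eqVneq j k.
    exact: herm_Im_diag.
  by rewrite /D PD.
exists (ReM V), (ImM V), (fun i => ReM (D i)); split.
- have := congr1 (@ReM _ _) VP; rewrite -dV ReM_mul ReM_dag ImM_dag ReM1.
  by rewrite mulmxN opprK.
- have := congr1 (@ReM _ _) PV; rewrite -dV ReM_mul ReM_dag ImM_dag ReM1.
  by rewrite mulNmx opprK.
- move=> i; apply/is_diag_mxP => j k jk; rewrite mxE /D PD //.
- move=> i; have := congr1 (@ReM _ _) (AV i).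
  move/(_ i): ImD => ImDi.
  rewrite ReM_mul ReM_CM ImM_CM mul0mx subr0 => ->.
  by rewrite ReM_mul ImDi mulmx0 subr0.
- move=> i; have := congr1 (@ImM _ _) (AV i).
  move/(_ i): ImD => ImDi.
  rewrite ImM_mul ReM_CM ImM_CM mul0mx addr0 => ->.
  by rewrite ImM_mul ImDi mulmx0 add0r.
Qed.
End Cx.

Section G.
Variable R : realType.

Definition firstb (T : eqType) m (g : 'I_m -> T) (k : 'I_m) :=
  [forall l : 'I_m, (l < k)%N ==> (g l != g k)].

Lemma first_uniq (T : eqType) m (g : 'I_m -> T) k k' :
  firstb g k -> firstb g k' -> g k = g k' -> k = k'.
Proof.
move=> /forall_inP fk /forall_inP fk' gkk'.
case: (ltngtP k k') => [kk'|k'k|/val_inj //].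
- by have := fk' k kk'; rewrite gkk' eqxx.
- by have := fk k' k'k; rewrite gkk' eqxx.
Qed.

Lemma first_ex (T : eqType) m (g : 'I_m -> T) l :
  exists2 k, firstb g k & g k = g l.
Proof.
have [k0 /eqP Pk0 mink0] := @arg_minnP _ l (fun k => g k == g l) val (eqxx _).
exists k0 => //; apply/forall_inP => l' l'k0; apply/negP => /eqP gl'.
have := mink0 l'; rewrite /= gl' Pk0 eqxx => /(_ isT).
by rewrite leqNgt l'k0.
Qed.

Lemma sum_first (T : eqType) m (g : 'I_m -> T) (F : 'I_m -> R) :
  \sum_k (if firstb g k then \sum_(l | g l == g k) F l else 0) = \sum_l F l.
Proof.
transitivity (\sum_k \sum_l (if firstb g k && (g l == g k) then F l else 0)).
  apply: eq_bigr => k _; case: ifP => fk /=.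
    by rewrite big_mkcond.
  by rewrite big1.
rewrite exchange_big /=; apply: eq_bigr => l _.
have [k0 fk0 gk0] := first_ex g l.
rewrite (bigD1 k0) //= fk0 -gk0 eqxx big1 ?addr0 // => k kk0.
case: ifP => // /andP[fk /eqP gk]; case/eqP: kk0.
exact: (first_uniq fk fk0).
Qed.

Lemma innerR_expand n m (w : 'I_m -> 'cV[R]_n) (s : 'I_m -> R) (B : 'M[R]_n)
  (mu : 'I_m -> R) :
  (forall l, B *m w l = mu l *: w l) ->
  innerR (\sum_k s k *: w k) (B *m \sum_k s k *: w k) =
  \sum_k \sum_l s k * s l * mu l * innerR (w k) (w l).
Proof.
move=> Bw; rewrite /innerR raddf_sum mulmx_suml summxE; apply: eq_bigr => k _.
rewrite mulmx_sumr mulmx_sumr summxE; apply: eq_bigr => l _.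
rewrite -scalemxAr Bw linearZ /= -scalemxAr scalemxAl !mxE.
rewrite !mulr_sumr; apply: eq_bigr => j _; rewrite !mxE; ring.
Qed.

Lemma innerR_symA n (A : 'M[R]_n) x y : A^T = A ->
  innerR x (A *m y) = innerR (A *m x) y.
Proof. by move=> AS; rewrite /innerR trmx_mul AS mulmxA. Qed.

Lemma group_lemma n m d (A : 'I_d -> 'M[R]_n) (w : 'I_m -> 'cV[R]_n)
  (lam : 'I_m -> 'I_d -> R) (q : 'I_m -> R) :
  (forall i, (A i)^T = A i) ->
  (forall k, innerR (w k) (w k) = 1) ->
  (forall k i, A i *m w k = lam k i *: w k) ->
  (forall k, 0 <= q k) ->
  exists x, innerR x x = \sum_k q k /\
    forall i, innerR x (A i *m x) = \sum_k q k * lam k i.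
Proof.
move=> AS w1 Aw q0.
pose g k : 'rV[R]_d := \row_i lam k i.
pose r k := if firstb g k then \sum_(l | g l == g k) q l else 0.
have r0 k : 0 <= r k.
  by rewrite /r; case: ifP => // _; apply: sumr_ge0.
pose s k := Num.sqrt (r k).
have orth k l : k != l -> firstb g k -> firstb g l -> innerR (w k) (w l) = 0.
  move=> kl fk fl; have gkl : g k != g l.
    by apply: contra kl => /eqP gkl; apply/eqP; exact: first_uniq gkl.
  have [i li] : exists i, lam k i != lam l i.
    apply/existsP; apply: contraR gkl => /existsPn H; apply/eqP/rowP => i.
    by rewrite !mxE; apply/eqP; move: (H i); rewrite negbK.
  have := innerR_symA (w k) (w l) (AS i); rewrite Aw Aw.
  rewrite /innerR -scalemxAr [(_ *: w k)^T]linearZ /= -scalemxAl !mxE => /eqP.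
  rewrite -subr_eq0 -mulrBl mulf_eq0 subr_eq0 eq_sym (negbTE li) /=.
  by move/eqP.
have key (B : 'M[R]_n) (mu : 'I_m -> R) : (forall l, B *m w l = mu l *: w l) ->
    (forall k l, g k = g l -> mu k = mu l) ->
    innerR (\sum_k s k *: w k) (B *m \sum_k s k *: w k) = \sum_k q k * mu k.
  move=> Bw gmu; rewrite (innerR_expand _ Bw).
  transitivity (\sum_k r k * mu k).
    apply: eq_bigr => k _; rewrite (bigD1 k) //= big1 ?addr0.
      by rewrite w1 mulr1 -expr2 sqr_sqrtr.
    move=> l lk; have [sk0|skn0] := eqVneq (s k) 0; first by rewrite sk0 !mul0r.
    have [sl0|sln0] := eqVneq (s l) 0; first by rewrite sl0 mulr0 !mul0r.
    have fk : firstb g k.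
      by apply: contraNT skn0; rewrite /s /r => /negbTE ->; rewrite sqrtr0.
    have fl : firstb g l.
      by apply: contraNT sln0; rewrite /s /r => /negbTE ->; rewrite sqrtr0.
    by rewrite orth ?mulr0 // eq_sym.
  rewrite -(sum_first g (fun l => q l * mu l)); apply: eq_bigr => k _.
  rewrite /r; case: ifP => _; last by rewrite mul0r.
  rewrite mulr_suml; apply: eq_bigr => l /eqP glk.
  by rewrite (gmu l k glk).
exists (\sum_k s k *: w k); split.
  rewrite -[X in innerR _ X]mul1mx (key _ (fun _ => 1)).
  - by apply: eq_bigr => k _; rewrite mulr1.
  - by move=> l; rewrite mul1mx scale1r.
  - by [].
move=> i; apply: key => // k l gkl.
by have := congr1 (fun v : 'rV[R]_d => v 0 i) gkl; rewrite /g !mxE.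
Qed.

Lemma col_mul m n p k (A : 'M[R]_(m, n)) (B : 'M[R]_(n, p)) :
  col k (A *m B) = A *m col k B.
Proof. by rewrite !colE mulmxA. Qed.

Lemma col_diag n (M D : 'M[R]_n) k : is_diag_mx D ->
  col k (M *m D) = D k k *: col k M.
Proof.
move=> /is_diag_mxP Dd; apply/matrixP => j z; rewrite !mxE (bigD1 k) //= big1.
  by rewrite addr0 mulrC.
by move=> l lk; rewrite Dd ?mulr0.
Qed.

Lemma innerR_entry m n p (M : 'M[R]_(m, n)) (X : 'M[R]_m) (N : 'M[R]_(m, p)) k l :
  (M^T *m X *m N) k l = innerR (col k M) (X *m col l N).
Proof.
rewrite -mulmxA /innerR !mxE; apply: eq_bigr => j _; rewrite !mxE; congr (_ * _).
by apply: eq_bigr => z _; rewrite !mxE.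
Qed.

Lemma trace_diag n (M D : 'M[R]_n) : is_diag_mx D ->
  \tr (M *m D) = \sum_k M k k * D k k.
Proof.
move=> /is_diag_mxP Dd; rewrite /mxtrace; apply: eq_bigr => k _.
rewrite mxE (bigD1 k) //= big1 ?addr0 // => l lk.
by rewrite Dd ?mulr0 // eq_sym.
Qed.

Lemma sumq_trace n (R0 J B Lm X : 'M[R]_n) :
  R0 *m R0^T + J *m J^T = 1%:M -> is_diag_mx Lm ->
  B *m R0 = R0 *m Lm -> B *m J = J *m Lm ->
  \sum_k (innerR (col k R0) (X *m col k R0) + innerR (col k J) (X *m col k J)) * Lm k k
  = \tr (B *m X).
Proof.
move=> RJ Ld BR BJ.
transitivity (\tr ((R0^T *m X *m R0 + J^T *m X *m J) *m Lm)).
  by rewrite trace_diag //; apply: eq_bigr => k _; rewrite mxE !innerR_entry.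
rewrite mulmxDl mxtraceD -!mulmxA -BR -BJ !mulmxA.
rewrite [\tr (R0^T *m _ *m _ *m _)]mxtrace_mulC [\tr (J^T *m _ *m _ *m _)]mxtrace_mulC.
by rewrite -!mulmxA -mxtraceD [R0 *m _]mulmxA [J *m _]mulmxA -mulmxDl RJ mul1mx mxtrace_mulC.
Qed.

Lemma innerR_ge0 n (v : 'cV[R]_n) : 0 <= innerR v v.
Proof. by rewrite /innerR mxE; apply: sumr_ge0 => j _; rewrite mxE -expr2 sqr_ge0. Qed.

Lemma innerRZ n (c : R) (v w : 'cV[R]_n) : innerR (c *: v) (c *: w) = c ^+ 2 * innerR v w.
Proof. by rewrite /innerR linearZ /= [(c *: v)^T]linearZ /= -scalemxAl !mxE mulrA -expr2. Qed.

Lemma normalize n (v : 'cV[R]_n) : innerR v v != 0 ->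
  innerR ((Num.sqrt (innerR v v))^-1 *: v) ((Num.sqrt (innerR v v))^-1 *: v) = 1.
Proof.
move=> vn0; rewrite innerRZ exprVn sqr_sqrtr ?innerR_ge0 // mulVf //.
Qed.

Lemma eigZ n (B : 'M[R]_n) (v : 'cV[R]_n) lam c :
  B *m v = lam *: v -> B *m (c *: v) = lam *: (c *: v).
Proof. by move=> Bv; rewrite -scalemxAr Bv !scalerA mulrC. Qed.

Lemma real_SDP_to_vec n d (A : 'I_d -> 'M[R]_n) :
  (forall i, psdR (A i)) -> (forall i j, A i *m A j = A j *m A i) ->
  forall X, psdR X -> \tr X = 1 ->
  exists x, innerR x x = 1 /\ forall i, innerR x (A i *m x) = mxinnerR (A i) X.
Proof.
move=> Ap Acm X [_ Xp] Xt.
have AS i : (A i)^T = A i by case: (Ap i).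
have [R0 [J [L [RJ1 RJ2 Ld AR AJ]]]] := real_decomp AS Acm.
pose a k := col k R0; pose b k := col k J.
have Aa k i : A i *m a k = L i k k *: a k by rewrite -col_mul AR col_diag.
have Ab k i : A i *m b k = L i k k *: b k by rewrite -col_mul AJ col_diag.
have ab1 k : innerR (a k) (a k) + innerR (b k) (b k) = 1.
  have E : (R0^T *m 1%:M *m R0 + J^T *m 1%:M *m J) k k = 1.
    by rewrite !mulmx1 RJ2 mxE eqxx.
  by move: E; rewrite mxE !innerR_entry !mul1mx.
pose w k := if innerR (a k) (a k) != 0
  then (Num.sqrt (innerR (a k) (a k)))^-1 *: a k
  else (Num.sqrt (innerR (b k) (b k)))^-1 *: b k.
have w1 k : innerR (w k) (w k) = 1.
  rewrite /w; case: ifP => [/normalize //|/negbFE/eqP a0].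
  by apply: normalize; move: (ab1 k); rewrite a0 add0r => ->; exact: oner_neq0.
have Aw k i : A i *m w k = L i k k *: w k.
  by rewrite /w; case: ifP => _; apply: eigZ.
pose q k := innerR (a k) (X *m a k) + innerR (b k) (X *m b k).
have q0 k : 0 <= q k by apply: addr_ge0.
have [x [x1 xA]] := @group_lemma n n d A w (fun k i => L i k k) q AS w1 Aw q0.
exists x; split.
  rewrite x1 -Xt -[X]mul1mx -(@sumq_trace n R0 J 1%:M 1%:M) //.
  - by apply: eq_bigr => k _; rewrite mxE eqxx mulr1.
  all: try by rewrite ?mul1mx ?mulmx1.
move=> i; rewrite xA /mxinnerR AS -(@sumq_trace n R0 J (A i) (L i)) //.
Qed.

Lemma real_vec_to_SDP n (x : 'cV[R]_n) : innerR x x = 1 ->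
  [/\ psdR (x *m x^T), \tr (x *m x^T) = 1 &
      forall B : 'M[R]_n, B^T = B -> mxinnerR B (x *m x^T) = innerR x (B *m x)].
Proof.
move=> x1; split.
- split; first by rewrite /symR trmx_mul trmxK.
  move=> y; rewrite /innerR !mulmxA -mulmxA [in X in 0 <= X]mxE big_ord1.
  have -> : (y^T *m x) 0 0 = (x^T *m y) 0 0.
    by rewrite !mxE; apply: eq_bigr => j _; rewrite !mxE mulrC.
  by rewrite -expr2 sqr_ge0.
- by rewrite mxtrace_mulC trace_mx11.
- by move=> B BS; rewrite /mxinnerR BS mulmxA mxtrace_mulC trace_mx11.
Qed.

Lemma real_main n d (A : 'I_d -> 'M[R]_n) :
  (forall i, psdR (A i)) -> (forall i j, A i *m A j = A j *m A i) ->
  OptR A = OptSDPR A.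
Proof.
move=> Ap Acm; rewrite /OptR /OptSDPR; congr sup.
apply/seteqP; split => v /=.
- move=> [x [x1 ->]]; have [Xp Xt XA] := real_vec_to_SDP x1.
  exists (x *m x^T); split => //; split => //; congr powR.
  by apply: eq_bigr => i _; rewrite XA //; case: (Ap i).
- move=> [X [Xp [Xt ->]]]; have [x [x1 xA]] := real_SDP_to_vec Ap Acm Xp Xt.
  by exists x; split => //; congr powR; apply: eq_bigr => i _; rewrite xA.
Qed.
End G.

Section Cmain.
Variable R : realType.
Local Notation C := R[i].

Lemma conjcE (z : C) : conjc z = Num.conj z.
Proof. by []. Qed.

Lemma dagC_mul m n p (M : 'M[C]_(m, n)) (N : 'M[C]_(n, p)) :
  dagC (M *m N) = dagC N *m dagC M.
Proof. by rewrite !dagCE trmx_mul map_mxM. Qed.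

Lemma dagCK m n (M : 'M[C]_(m, n)) : dagC (dagC M) = M.
Proof. by rewrite !dagCE trmxCK. Qed.

Lemma innerC_entry m n p (M : 'M[C]_(m, n)) (X : 'M[C]_m) (N : 'M[C]_(m, p)) k l :
  (dagC M *m X *m N) k l = innerC (col k M) (X *m col l N).
Proof.
rewrite -mulmxA /innerC !mxE; apply: eq_bigr => j _; rewrite !mxE; congr (_ * _).
by apply: eq_bigr => z _; rewrite !mxE.
Qed.

Lemma trace_diagC n (M D : 'M[C]_n) : is_diag_mx D ->
  \tr (D *m M) = \sum_k D k k * M k k.
Proof.
move=> /is_diag_mxP Dd; rewrite /mxtrace; apply: eq_bigr => k _.
rewrite mxE (bigD1 k) //= big1 ?addr0 // => l lk.
by rewrite Dd ?mul0r // eq_sym.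
Qed.

Lemma quadC_diag n (D : 'M[C]_n) (y : 'cV[C]_n) : is_diag_mx D ->
  (dagC y *m D *m y) 0 0 = \sum_k D k k * (Num.conj (y k 0) * y k 0).
Proof.
move=> /is_diag_mxP Dd; rewrite mxE; apply: eq_bigr => k _.
rewrite mxE (bigD1 k) //= big1 ?addr0.
  by rewrite !mxE; ring.
by move=> l lk; rewrite Dd ?mulr0 ?mul0r // eq_sym.
Qed.

Lemma cplx_SDP_to_vec n d (A : 'I_d -> 'M[C]_n) :
  (forall i, psdC (A i)) -> (forall i j, A i *m A j = A j *m A i) ->
  forall X, psdC X -> \tr X = 1 ->
  exists x, innerC x x = 1 /\ forall i, innerC x (A i *m x) = mxinnerC (A i) X.
Proof.
move=> Ap Acm X [_ Xp] Xt.
have AH i : dagC (A i) = A i by case: (Ap i).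
have AH' i : (A i) ^t Num.conj = A i by rewrite -dagCE AH.
have [P Pu PD] := codiag AH' Acm.
set V := P ^t Num.conj.
have PV : P *m V = 1%:M by apply/unitarymxP.
have VP : V *m P = 1%:M by rewrite -[V *m P]mul1mx mulmxA mulmxKtV.
have dV : dagC V = P by rewrite dagCE trmxCK.
have Dd i : is_diag_mx (P *m A i *m V).
  by apply/is_diag_mxP => j k jk; rewrite PD.
pose q k := (P *m X *m V) k k.
have q0 k : 0 <= q k by rewrite /q -dV innerC_entry Xp.
pose y : 'cV[C]_n := \col_k sqrtC (q k).
have yy k : Num.conj (y k 0) * y k 0 = q k.
  by rewrite mxE geC0_conj ?sqrtC_ge0 // -expr2 sqrtCK.
have sq : \sum_k q k = 1.
  by change (\tr (P *m X *m V) = 1); rewrite -Xt mxtrace_mulC mulmxA VP mul1mx.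
exists (V *m y); split.
  rewrite /innerC dagC_mul dV mulmxA -(mulmxA _ P) PV mulmx1.
  rewrite -[dagC y]mulmx1 quadC_diag ?scalar_mx_is_diag // -[RHS]sq.
  by apply: eq_bigr => k _; rewrite yy mxE eqxx mul1r.
move=> i; rewrite /innerC dagC_mul dV.
have -> : dagC y *m P *m (A i *m (V *m y)) = dagC y *m (P *m A i *m V) *m y.
  by rewrite !mulmxA.
rewrite quadC_diag //.
under eq_bigr do rewrite yy.
rewrite -(trace_diagC (P *m X *m V) (Dd i)) /mxinnerC AH.
rewrite -!mulmxA [V *m (P *m _)]mulmxA VP mul1mx mxtrace_mulC.
by rewrite -!mulmxA VP mulmx1.
Qed.

Lemma cplx_vec_to_SDP n (x : 'cV[C]_n) : innerC x x = 1 ->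
  [/\ psdC (x *m dagC x), \tr (x *m dagC x) = 1 &
      forall B : 'M[C]_n, dagC B = B -> mxinnerC B (x *m dagC x) = innerC x (B *m x)].
Proof.
move=> x1; split.
- split; first by rewrite /Defs.hermC dagC_mul dagCK.
  move=> y; rewrite /innerC !mulmxA -mulmxA [in X in 0 <= X]mxE big_ord1.
  have -> : (dagC x *m y) 0 0 = Num.conj ((dagC y *m x) 0 0).
    rewrite !mxE rmorph_sum; apply: eq_bigr => j _.
    by rewrite !mxE !conjcE rmorphM /= conjCK mulrC.
  exact: mul_conjC_ge0.
- by rewrite mxtrace_mulC trace_mx11.
- by move=> B BH; rewrite /mxinnerC BH mulmxA mxtrace_mulC trace_mx11.
Qed.

Lemma cplx_main n d (A : 'I_d -> 'M[C]_n) :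
  (forall i, psdC (A i)) -> (forall i j, A i *m A j = A j *m A i) ->
  OptC A = OptSDPC A.
Proof.
move=> Ap Acm; rewrite /OptC /OptSDPC; congr sup.
apply/seteqP; split => v /=.
- move=> [x [x1 ->]]; have [Xp Xt XA] := cplx_vec_to_SDP x1.
  exists (x *m dagC x); split => //; split => //; congr powR.
  by apply: eq_bigr => i _; rewrite XA //; case: (Ap i).
- move=> [X [Xp [Xt ->]]]; have [x [x1 xA]] := cplx_SDP_to_vec Ap Acm Xp Xt.
  by exists x; split => //; congr powR; apply: eq_bigr => i _; rewrite xA.
Qed.
End Cmain.

Theorem mainTheorem7 (R : realType) (n d : nat) :
  (forall A : 'I_d -> 'M[R]_n,
     (forall i, psdR (A i)) ->
     (forall i j, A i *m A j = A j *m A i) ->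
     OptR A = OptSDPR A) /\
  (forall A : 'I_d -> 'M[R[i]]_n,
     (forall i, psdC (A i)) ->
     (forall i j, A i *m A j = A j *m A i) ->
     OptC A = OptSDPC A).
Proof.
split; [exact: real_main | exact: cplx_main].
Qed.
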